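(* Let $\mathcal{Q}=\mathcal{Q}_\ell(T,X,Y)$ and let $\sigma^{\mathcal{Q}}$ be the least monoid congruence on $\mathcal{Q}$ containing $Y\times Y$. If $\alpha=h_1h_2\cdots h_n\in\mathcal{Q}$ is in $H^{\mathcal{P}}$-canonical form, where $h_i=s_ie_i\in H^{\mathcal{Q}}$ ($s_i\in T$, $e_i\in Y$) for $1\le i\le n$, then there exists $e\in Y$ with $s_1s_2\cdots s_n\cdot e\in Y$ and $\alpha\,\sigma^{\mathcal{Q}}\,s_1s_2\cdots s_ne$.
   Context: Let $T$ be a monoid, $X$ a semilattice with identity $1_X$ (ordered by $e\le f$ iff $ef=e$) with an order-preserving left action of $T$. $\mathcal{P}_\ell(T,X)$: let $T*X$ be the semigroup free product acting on $X$ (elements of $X$ act by multiplication), $\omega^+=\omega\cdot1_X$, $\sim$ the semigroup congruence generated by $\{(\alpha^+\alpha,\alpha)\}\cup\{(1_T,1_X)\}$, and $\mathcal{P}_\ell(T,X)=(T*X)/\sim$ with $[\alpha]^+=[\alpha^+]$; $X$, $T$ are identified with their injective images. It is a left Ehresmann monoid with projections $X$, unique $T$-normal forms $t_0e_1t_1\cdots e_nt_n$ ($n\ge0$, $e_i\in X\setminus\{1\}$, $t_1,\dots,t_{n-1}\in T\setminus\{1\}$, $e_i<(t_ie_{i+1}\cdots e_nt_n)^+$), and unary operation $a^*=e_n$ if $n\ge1$, $t_n=1$, and $a^*=1$ otherwise. $H^{\mathcal{P}}=\{te:t\in T,e\in X\}$; an $H^{\mathcal{P}}$-canonical form is an expression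 $h_1\cdots h_n$, $h_i\in H^{\mathcal{P}}$, with $h_i^*<h_{i+1}^+$ ($1\le i<n$) and $h_i\notin X$ ($2\le i\le n$). Let $Y$ be a subsemilattice of $X$ having an identity, satisfying (A): for all $t\in T$, $e,f\in Y$ with $e\le f$, $t\cdot f\in Y$ implies $t\cdot e\in Y$; (B): for all $t\in T$ there is $g\in Y$ with $t\cdot g\in Y$. $H^{\mathcal{Q}}=\{te:t\in T,e\in Y,t\cdot e\in Y\}$, and $\mathcal{Q}_\ell(T,X,Y)$ is the subsemigroup of $\mathcal{P}_\ell(T,X)$ generated by $H^{\mathcal{Q}}$; it is a monoid with identity the identity of $Y$. *)

(* Defs.v *)
From Stdlib Require Import List.
Import ListNotations.
Set Implicit Arguments.

Record Monoid := {
  mcar :> Type;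
  mmul : mcar -> mcar -> mcar;
  mone : mcar;
  mmulA : forall a b c, mmul a (mmul b c) = mmul (mmul a b) c;
  mmul1l : forall a, mmul mone a = a;
  mmul1r : forall a, mmul a mone = a }.

Record Semilattice := {
  scar :> Type;
  smul : scar -> scar -> scar;
  sone : scar;
  smulA : forall a b c, smul a (smul b c) = smul (smul a b) c;
  smulC : forall a b, smul a b = smul b a;
  smulI : forall a, smul a a = a;
  smul1l : forall a, smul sone a = a }.

Arguments smul {s}.
Arguments sone s : clear implicits.
Arguments mmul {m}.
Arguments mone m : clear implicits.

Definition sle {X : Semilattice} (e f : X) : Prop := smul e f = e.
Definition slt {X : Semilattice} (e f : X) : Prop := sle e f /\ e <> f.

Record LAction (T : Monoid) (X : Semilattice) := {
  act : T -> X -> X;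
  act_mul : forall s t x, act (mmul s t) x = act s (act t x);
  act_one : forall x, act (mone T) x = x;
  act_mono : forall t e f, sle e f -> sle (act t e) (act t f) }.

Section PQ.
Context {T : Monoid} {X : Semilattice} (A : LAction T X).

(** Words in the free semigroup on the disjoint union of T and X
    (nonempty words represent elements of T * X). *)
Inductive letter := LT (t : T) | LX (e : X).
Definition word := list letter.

Fixpoint actW (w : word) (x : X) : X :=
  match w with
  | [] => x
  | LT t :: w' => act A t (actW w' x)
  | LX e :: w' => smul e (actW w' x)
  end.

Definition plusW (w : word) : X := actW w (sone X).

(** The congruence on the free semigroup whose quotient is P_l(T,X):
    free product relations (T*X as a quotient of the free semigroup on T+X)
    together with (alpha^+ alpha, alpha) and (1_T, 1_X). *)
Inductive psim : word -> word -> Prop :=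
| ps_refl w : psim w w
| ps_sym u v : psim u v -> psim v u
| ps_trans u v w : psim u v -> psim v w -> psim u w
| ps_cat u u' v v' : psim u u' -> psim v v' -> psim (u ++ v) (u' ++ v')
| ps_TT s t : psim [LT s; LT t] [LT (mmul s t)]
| ps_XX e f : psim [LX e; LX f] [LX (smul e f)]
| ps_plus w : w <> [] -> psim (LX (plusW w) :: w) w
| ps_one : psim [LT (mone T)] [LX (sone X)].

(** T-normal forms t0 e1 t1 ... en tn, encoded as t0 and [(e1,t1);...;(en,tn)]. *)
Definition nfTail (l : list (X * T)) : word :=
  flat_map (fun p => [LX (fst p); LT (snd p)]) l.
Definition nfWord (t0 : T) (l : list (X * T)) : word := LT t0 :: nfTail l.

Fixpoint nf_ok (l : list (X * T)) : Prop :=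
  match l with
  | [] => True
  | (e, t) :: rest =>
      e <> sone X /\ (rest <> [] -> t <> mone T) /\
      slt e (plusW (LT t :: nfTail rest)) /\ nf_ok rest
  end.

(** a^* = e_n if n >= 1 and t_n = 1, and a^* = 1 otherwise. *)
Definition star_of (l : list (X * T)) (f : X) : Prop :=
  (exists l' e, l = l' ++ [(e, mone T)] /\ f = e) \/
  (~ (exists l' e, l = l' ++ [(e, mone T)]) /\ f = sone X).

(** [starP w f]: f = [w]^*, computed from a T-normal form of [w]. *)
Definition starP (w : word) (f : X) : Prop :=
  exists t0 l, nf_ok l /\ psim (nfWord t0 l) w /\ star_of l f.

(** The word t e representing an element of H^P. *)
Definition hw (p : T * X) : word := [LT (fst p); LX (snd p)].

Section QY.
Variable Y : X -> Prop.

Definition inHQ (p : T * X) : Prop := Y (snd p) /\ Y (act A (fst p) (snd p)).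

(** Q_l(T,X,Y): subsemigroup of P generated by H^Q. *)
Definition inQ (w : word) : Prop :=
  exists hs, hs <> [] /\ Forall inHQ hs /\ psim (flat_map hw hs) w.

Inductive sigQ : word -> word -> Prop :=
| sq_Y e f : Y e -> Y f -> sigQ [LX e] [LX f]
| sq_eq u v : inQ u -> psim u v -> sigQ u v
| sq_sym u v : sigQ u v -> sigQ v u
| sq_trans u v w : sigQ u v -> sigQ v w -> sigQ u w
| sq_mull w u v : inQ w -> sigQ u v -> sigQ (w ++ u) (w ++ v)
| sq_mulr w u v : inQ w -> sigQ u v -> sigQ (u ++ w) (v ++ w).
End QY.

Definition canonicalHP (hs : list (T * X)) : Prop :=
  hs <> [] /\
  (forall i d, S i < length hs ->
     exists f, starP (hw (nth i hs d)) f /\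
               slt f (plusW (hw (nth (S i) hs d)))) /\
  (forall i d, 1 <= i < length hs ->
     ~ exists x, psim (hw (nth i hs d)) [LX x]).

Definition prodT (hs : list (T * X)) : T :=
  fold_right (fun p acc => mmul (fst p) acc) (mone T) hs.

End PQ.

(* Main.v *)
Require Import Defs.
From Stdlib Require Import List.
Import ListNotations.
Set Implicit Arguments.

Section Aux.
Variables (T : Monoid) (X : Semilattice) (A : LAction T X) (Y : X -> Prop).
Hypothesis Y_mul : forall e f, Y e -> Y f -> Y (smul e f).
Hypothesis condA : forall (t : T) (e f : X), Y e -> Y f -> sle e f ->
             Y (act A t f) -> Y (act A t e).
Hypothesis condB : forall t : T, exists g, Y g /\ Y (act A t g).

Lemma inQ_psim u v : inQ A Y u -> psim A u v -> inQ A Y v.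
Proof. intros [hs [H1 [H2 H3]]] H. exists hs. repeat split; auto.
  eapply ps_trans; eauto. Qed.

Lemma sq_ps u v : inQ A Y v -> psim A u v -> sigQ A Y u v.
Proof. intros Hv H. apply sq_sym. apply sq_eq; auto. apply ps_sym; auto. Qed.

Lemma inQ_h s e : inHQ A Y (s, e) -> inQ A Y [LT s; LX e].
Proof. intros H. exists [(s,e)]. repeat split; auto. discriminate.
  simpl. apply ps_refl. Qed.

Lemma inQ_hh s e s' e' : inHQ A Y (s, e) -> inHQ A Y (s', e') ->
  inQ A Y [LT s; LX e; LT s'; LX e'].
Proof. intros H H'. exists [(s,e);(s',e')]. repeat split; auto. discriminate.
  simpl. apply ps_refl. Qed.

Lemma sle_meet (e g : X) : sle (smul e g) e.
Proof. unfold sle. rewrite smulC, smulA, smulI. reflexivity. Qed.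

Lemma L0 s e m : inHQ A Y (s, e) -> Y m ->
  sigQ A Y [LT s; LX e] [LT s; LX (smul e m)].
Proof. intros He Hm.
  assert (Hm' : inHQ A Y (s, smul e m)).
  { destruct He as [H1 H2]; simpl in *. split; simpl; auto.
    apply condA with (f := e); auto. apply sle_meet. }
  apply sq_trans with [LT s; LX e; LX e].
  - assert (H : psim A [LX e; LX e] [LX e]).
    { pose proof (ps_XX A e e) as H. rewrite smulI in H. exact H. }
    apply sq_eq. apply inQ_h; auto.
    apply (ps_cat (ps_refl A [LT s]) (ps_sym H)).
  - apply sq_trans with [LT s; LX e; LX m].
    + change [LT s; LX e; LX e] with ([LT s; LX e] ++ [LX e]).
      change [LT s; LX e; LX m] with ([LT s; LX e] ++ [LX m]).
      apply sq_mull. apply inQ_h; auto. apply sq_Y; destruct He; auto.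
    + apply sq_sym. apply sq_eq. apply inQ_h; auto.
      apply (ps_cat (ps_refl A [LT s]) (ps_sym (ps_XX A e m))).
Qed.

Lemma L1 s e g : inHQ A Y (s, e) -> inHQ A Y (s, g) ->
  sigQ A Y [LT s; LX e] [LT s; LX g].
Proof. intros He Hg.
  apply sq_trans with [LT s; LX (smul e g)].
  - apply L0; auto. destruct Hg; auto.
  - apply sq_sym. rewrite smulC. apply L0; auto. destruct He; auto.
Qed.

Lemma gen hs : hs <> [] -> Forall (inHQ A Y) hs -> exists e, Y e /\
  Y (act A (prodT hs) e) /\ sigQ A Y (flat_map hw hs) [LT (prodT hs); LX e].
Proof.
  induction hs as [|[s1 e1] rest IH]; intros Hne HF. { congruence. }
  inversion HF as [|? ? Hh Hrest]; subst.
  destruct rest as [|h2 rest'].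
  - exists e1. simpl. rewrite mmul1r. destruct Hh as [Ha Hb]. simpl in *.
    split; auto. split; auto. apply sq_eq. apply inQ_h. split; auto. apply ps_refl.
  - destruct (IH ltac:(discriminate) Hrest) as [e' [Ye' [Yse' Hsig]]].
    set (s' := prodT (h2 :: rest')) in *.
    set (l := h2 :: rest') in *.
    destruct (condB (mmul s1 s')) as [g0 [Yg0 Yg0']].
    set (g := smul e' g0).
    assert (Yg : Y g) by (apply Y_mul; auto).
    assert (Ysg : Y (act A s' g)).
    { apply condA with (f := e'); auto. unfold g, sle.
      rewrite (smulC _ e' g0), <- smulA, smulI. reflexivity. }
    assert (Ys1sg : Y (act A s1 (act A s' g))).
    { rewrite <- act_mul. apply condA with (f := g0); auto. unfold g, sle.
      rewrite <- smulA, smulI. reflexivity. }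
    exists g. change (prodT ((s1, e1) :: l)) with (mmul s1 s').
    change (flat_map hw ((s1, e1) :: l)) with ([LT s1; LX e1] ++ flat_map hw l).
    split; auto. split. { rewrite act_mul. auto. }
    apply sq_trans with ([LT s1; LX e1] ++ [LT s'; LX e']).
    { apply sq_mull; auto. apply inQ_h; auto. }
    apply sq_trans with ([LT s1; LX e1] ++ [LT s'; LX g]).
    { apply sq_mull. apply inQ_h; auto. apply L1; split; auto. }
    apply sq_trans with ([LT s1; LX (act A s' g)] ++ [LT s'; LX g]).
    { apply sq_mulr. apply inQ_h; split; auto. apply L1; auto. split; auto. }
    apply sq_eq. apply inQ_hh; split; auto.
    assert (Hp : plusW A [LT s'; LX g] = act A s' g).
    { unfold plusW. simpl. rewrite smulC, smul1l. reflexivity. }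
    apply ps_trans with ([LT s1] ++ [LT s'; LX g]).
    { change ([LT s1; LX (act A s' g)] ++ [LT s'; LX g]) with
        ([LT s1] ++ (LX (act A s' g) :: [LT s'; LX g])).
      apply ps_cat. apply ps_refl. rewrite <- Hp. apply ps_plus. discriminate. }
    change ([LT s1] ++ [LT s'; LX g]) with ([LT s1; LT s'] ++ [LX g]).
    change [LT (mmul s1 s'); LX g] with ([LT (mmul s1 s')] ++ [LX g]).
    apply ps_cat. apply ps_TT. apply ps_refl.
Qed.
End Aux.

Theorem mainTheorem16 (T : Monoid) (X : Semilattice) (A : LAction T X)
  (Y : X -> Prop)
  (Y_mul : forall e f, Y e -> Y f -> Y (smul e f))
  (Y_id : exists oneY, Y oneY /\ forall f, Y f -> smul oneY f = f)
  (condA : forall (t : T) (e f : X), Y e -> Y f -> sle e f ->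
             Y (act A t f) -> Y (act A t e))
  (condB : forall t : T, exists g, Y g /\ Y (act A t g))
  (hs : list (T * X))
  (hsQ : Forall (inHQ A Y) hs)
  (hscan : canonicalHP A hs) :
  exists e : X, Y e /\ Y (act A (prodT hs) e) /\
    sigQ A Y (flat_map hw hs) [LT (prodT hs); LX e].
Proof.
  apply gen; auto. destruct hscan; auto.
Qed.
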